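(* Let $K$ be an imaginary quadratic field with discriminant $d_K$, let $f\ge1$ and let $\mathcal{O}$ be the order of conductor $f$ in $K$, of discriminant $D=f^2d_K$. Let $\tau=a/b\in K\cap\mathbb{H}$ with $a,b\in\mathcal{O}_K$, $b\ne0$, have discriminant $D(\tau)=D$. Then $\mathrm{pr}_D([\Xi_D(Q_\tau)])=[\langle a,b\rangle]$ in $\mathrm{Cl}_K$, where $\langle a,b\rangle=a\mathcal{O}_K+b\mathcal{O}_K$.
   Context: $\mathbb{H}$ is the upper half-plane. For $\tau\in K\cap\mathbb{H}$, $Q_\tau(x,y)=Ax^2+Bxy+Cy^2$ is the unique form with $A,B,C\in\mathbb{Z}$, $\gcd(A,B,C)=1$, $A>0$, $A\tau^2+B\tau+C=0$, and $D(\tau)=B^2-4AC$. For a positive definite form $Q=Ax^2+Bxy+Cy^2$ of discriminant $D$, $\Xi_D(Q):=\mathbb{Z}A+\mathbb{Z}\frac{-B+\sqrt{D}}{2}$, which is an invertible ideal of $\mathcal{O}$. $\mathrm{Cl}(\mathcal{O})$ is the group of invertible fractional $\mathcal{O}$-ideals modulo principal ones, and $\mathrm{pr}_D\colon\mathrm{Cl}(\mathcal{O})\to\mathrm{Cl}_K$ is the well-defined map $[\mathfrak{a}]\mapsto[\mathfrak{a}\mathcal{O}_K]$. *)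

(* Defs.v *)
(* the imaginary quadratic field K = Q(sqrt dK) is realised
   inside the algebraic complex numbers algC. *)
From mathcomp Require Import all_boot all_order all_algebra all_field.
Set Implicit Arguments. Unset Strict Implicit. Unset Printing Implicit Defensive.
Import Order.TTheory GRing.Theory Num.Theory.
Local Open Scope ring_scope.

Definition sqfree (n : int) : Prop :=
  forall p : nat, prime p -> ~~ (((p ^ 2)%N%:Z) %| n)%Z.

Definition is_fund_disc (d : int) : Prop :=
  ((d %% 4)%Z = 1 /\ sqfree d) \/
  (exists m : int, d = 4 * m /\ ((m %% 4)%Z = 2 \/ (m %% 4)%Z = 3) /\ sqfree m).

(* sqrt of an integer in algC (for negative n: the root with positive imaginary part) *)
Definition sqrtZ (n : int) : algC := sqrtC (n%:~R).

Definition inK (dK : int) (z : algC) : Prop :=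
  exists p q : rat, z = ratr p + ratr q * sqrtZ dK.

Definition omegaK (dK : int) : algC := (dK%:~R + sqrtZ dK) / 2.
Definition inOK (dK : int) (z : algC) : Prop :=
  exists x y : int, z = x%:~R + y%:~R * omegaK dK.

Definition inO (dK : int) (f : nat) (z : algC) : Prop :=
  exists x y : int, z = x%:~R + y%:~R * (f%:R * omegaK dK).

(* Q_tau: the primitive form A x^2 + B x y + C y^2 with A > 0 vanishing at tau *)
Definition is_Q_tau (tau : algC) (A B C : int) : Prop :=
  gcdz (gcdz A B) C = 1 /\ 0 < A /\
  A%:~R * tau ^+ 2 + B%:~R * tau + C%:~R = 0.

Definition discr (A B C : int) : int := B ^+ 2 - 4 * A * C.

Definition Xi (D A B : int) : algC -> Prop :=
  fun z => exists m n : int,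
    z = m%:~R * A%:~R + n%:~R * ((- B%:~R + sqrtZ D) / 2).

(* the O_K-ideal a O_K generated by a subset a of algC: finite sums of x*y *)
Definition extOK (dK : int) (I : algC -> Prop) : algC -> Prop :=
  fun z => exists s : seq (algC * algC),
    (forall p, p \in s -> I p.1 /\ inOK dK p.2) /\
    z = \sum_(p <- s) p.1 * p.2.

Definition gen2 (dK : int) (a b : algC) : algC -> Prop :=
  fun z => exists x y, inOK dK x /\ inOK dK y /\ z = a * x + b * y.

Definition scaleI (l : algC) (J : algC -> Prop) : algC -> Prop :=
  fun z => exists w, J w /\ z = l * w.

Definition same_class_K (dK : int) (I J : algC -> Prop) : Prop :=
  exists l : algC, inK dK l /\ l != 0 /\ forall z, I z <-> scaleI l J z.

Definition prD_eq (dK : int) (I J : algC -> Prop) : Prop :=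
  same_class_K dK (extOK dK I) J.

(* Main.v *)
Require Import Defs.
From mathcomp Require Import all_boot all_order all_algebra all_field.
From mathcomp Require Import ring lra.
Import Order.TTheory GRing.Theory Num.Theory.
Local Open Scope ring_scope.

Lemma inOK0 dK : inOK dK 0.
Proof. by exists 0, 0; rewrite !mul0r addr0. Qed.

Lemma inOKD dK x y : inOK dK x -> inOK dK y -> inOK dK (x + y).
Proof.
move=> [x1 [y1 ->]] [x2 [y2 ->]]; exists (x1 + x2), (y1 + y2).
rewrite !intrD; ring.
Qed.

Lemma inOKZ dK (m : int) x : inOK dK x -> inOK dK (m%:~R * x).
Proof.
move=> [x1 [y1 ->]]; exists (m * x1), (m * y1).
rewrite !intrM; ring.
Qed.

Lemma key_tau (tau : algC) (A B C : int) (D : int) :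
  0 < 'Im tau -> is_Q_tau tau A B C -> discr A B C = D ->
  A%:~R * tau = (- B%:~R + sqrtZ D) / 2.
Proof.
move=> Htau [_ [A0 Heq]] HD.
set s := sqrtZ D.
have s2 : s ^+ 2 = D%:~R by rewrite /s /sqrtZ sqrtCK.
have hD : (D%:~R : algC) = B%:~R ^+ 2 - 4 * A%:~R * C%:~R.
  by rewrite -HD /discr intrB !intrM ; rewrite ?rmorphXn //=; ring.
set u := 2 * A%:~R * tau + B%:~R.
have hu : (u - s) * (u + s) = 0.
  have -> : (u - s) * (u + s) = u ^+ 2 - s ^+ 2 by ring.
  rewrite s2 hD /u.
  have -> : (2 * A%:~R * tau + B%:~R) ^+ 2 - (B%:~R ^+ 2 - 4 * A%:~R * C%:~R)
     = 4 * A%:~R * (A%:~R * tau ^+ 2 + B%:~R * tau + C%:~R) :> algC by ring.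
  by rewrite Heq mulr0.
have Imu : 0 < 'Im u.
  rewrite /u raddfD /= (Creal_ImP _ (realz _ _)) addr0 ImMl ?(rpredM, realz, realn) //.
  by rewrite mulr_gt0 // mulr_gt0 // ltr0z.
have : u - s = 0.
  move/eqP: hu; rewrite mulf_eq0 => /orP[/eqP hus|/eqP hus]; first exact: hus.
  have us : u = - s by apply/eqP; rewrite -subr_eq0 opprK hus.
  move: Imu; rewrite us raddfN /= oppr_gt0 => hlt.
  have h : 0 <= 'Im s by rewrite /s /sqrtZ Im_rootC_ge0.
  by have := le_lt_trans h hlt; rewrite ltxx.
move/eqP; rewrite subr_eq0 /u => /eqP H.
rewrite -H; by field.
Qed.

Lemma inK_div dK (A : int) b : dK < 0 -> inOK dK b -> b != 0 -> inK dK (A%:~R / b).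
Proof.
move=> dKneg [x [y Hb]] bnz.
set s := sqrtZ dK.
have s2 : s ^+ 2 = dK%:~R by rewrite /s /sqrtZ sqrtCK.
pose u : rat := x%:~R + y%:~R * dK%:~R / 2.
pose v : rat := y%:~R / 2.
have hb : b = ratr u + ratr v * s.
  rewrite Hb /u /v /omegaK -/s !CratrE /=. by field.
pose N : rat := u ^+ 2 - v ^+ 2 * dK%:~R.
have Nnz : N != 0.
  have dKr : (dK%:~R : rat) < 0 by rewrite ltrz0.
  apply/negP => /eqP N0.
  have u0 : u = 0.
    apply/eqP; rewrite -sqrf_eq0 eq_le sqr_ge0 andbT.
    have : u ^+ 2 = v ^+ 2 * dK%:~R by apply/eqP; rewrite -subr_eq0 -/N N0.
    move=> ->; rewrite mulr_ge0_le0 ?sqr_ge0 // ltW //.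
  have v0 : v = 0.
    have : v ^+ 2 * dK%:~R = 0 by rewrite -[LHS]opprK -[X in _ = X]oppr0 -N0 /N u0; ring.
    by move/eqP; rewrite mulf_eq0 (negbTE (ltr0_neq0 dKr)) orbF sqrf_eq0 => /eqP.
  by move: bnz; rewrite hb u0 v0 !CratrE mul0r addr0 eqxx.
have hw : (ratr u + ratr v * s) * (ratr u - ratr v * s) = ratr N :> algC.
  transitivity (ratr u ^+ 2 - ratr v ^+ 2 * s ^+ 2 : algC); first by ring.
  by rewrite s2 /N !CratrE.
have Nnz' : (ratr N : algC) != 0 by rewrite fmorph_eq0.
have wnz : (ratr u - ratr v * s : algC) != 0.
  by apply: contra Nnz' => /eqP w0; rewrite -hw w0 mulr0.
clearbody u v N.
have E : A%:~R / b = A%:~R * ratr u / ratr N + - (A%:~R * ratr v / ratr N) * s.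
  rewrite hb in bnz *.
  move: hw Nnz' wnz bnz.
  move: (ratr u : algC) (ratr v : algC) (ratr N : algC) => U V M hw Mnz wnz bnz.
  rewrite -hw; by field; rewrite bnz wnz.
exists (A%:~R * u / N), (- (A%:~R * v / N)).
rewrite !CratrE -/s.
exact: E.
Qed.

Theorem proposition5p8 (dK : int) (f : nat) (a b : algC) (A B C : int) :
  is_fund_disc dK -> dK < 0 -> (0 < f)%N ->
  inOK dK a -> inOK dK b -> b != 0 ->
  0 < 'Im (a / b) ->
  is_Q_tau (a / b) A B C ->
  discr A B C = (f ^ 2)%N%:Z * dK ->
  prD_eq dK (Xi ((f ^ 2)%N%:Z * dK) A B) (gen2 dK a b).
Proof.
move=> _ dKneg fpos ha hb bnz Him HQ HD.
have key := @key_tau _ _ _ _ _ Him HQ HD.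
have A0 : (A%:~R : algC) != 0.
  by case: HQ => _ [A0 _]; rewrite intr_eq0 gt_eqF.
exists (A%:~R / b); split; first exact: inK_div.
split; first by rewrite mulf_neq0 // invr_neq0.
move=> z; split.
- move=> [s [Hs ->]].
  have : exists X Y, inOK dK X /\ inOK dK Y /\
      \sum_(p <- s) p.1 * p.2 = A%:~R * Y + A%:~R * (a / b) * X.
    elim: s Hs => [|p s IH] Hs.
      exists 0, 0; split; first exact: inOK0.
      split; first exact: inOK0.
      by rewrite big_nil; ring.
    have [Hp1 Hp2] := Hs p (mem_head _ _).
    have [X [Y [HX [HY E]]]] := IH (fun q hq => Hs q ltac:(by rewrite inE hq orbT)).
    case: Hp1 => m [n Hp1].
    exists (n%:~R * p.2 + X), (m%:~R * p.2 + Y).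
    split; first by apply: inOKD => //; apply: inOKZ.
    split; first by apply: inOKD => //; apply: inOKZ.
    rewrite big_cons E Hp1 key; ring.
  move=> [X [Y [HX [HY ->]]]].
  exists (a * X + b * Y); split; first by exists X, Y.
  by field.
- move=> [w [[x [y [Hx [Hy ->]]]] ->]].
  exists [:: (A%:~R, y); ((- B%:~R + sqrtZ ((f ^ 2)%N%:Z * dK)) / 2, x)].
  split.
    move=> p; rewrite !inE => /orP[/eqP->|/eqP->] /=; split => //.
      by exists 1, 0; ring.
    by exists 0, 1; ring.
  rewrite !big_cons big_nil -key.
  by rewrite /=; field.
Qed.
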